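(* Let $X$ be a random variable on a probability space with $X \ge 0$ almost surely and $X \in L^2$ (i.e. $E X^2 < \infty$). Let $0 < r < s \le 1$. Then $$\operatorname{Var}(X^r)^{1/r} \le \operatorname{Var}(X^s)^{1/s}.$$
   Context: $\operatorname{Var}(Y) = E(Y^2) - (EY)^2$ denotes the variance of a square-integrable random variable $Y$. Statements such as $X\ge 0$ are meant almost surely. *)

(* Defs.v *)
From HB Require Import structures.
From mathcomp Require Import all_boot all_order all_algebra.
From mathcomp Require Import all_classical all_reals all_analysis.

(* Main.v *)
Require Import Defs.
From HB Require Import structures.
From mathcomp Require Import all_boot all_order all_algebra.
From mathcomp Require Import all_classical all_reals all_analysis.
From mathcomp Require Import measurable_realfun.
Import Order.TTheory GRing.Theory Num.Theory.
Local Open Scope ring_scope.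

Section real_lemmas.
Context {R : realType}.
Implicit Types x y u v p : R.

Lemma superadd_powR x y p : 0 <= x -> 0 <= y -> 1 <= p ->
  x `^ p + y `^ p <= (x + y) `^ p.
Proof.
move=> x0 y0 p1; have p0 : 0 < p by rewrite (lt_le_trans ltr01).
have xy0 : 0 <= x + y by rewrite addr_ge0.
rewrite -(mulr_powRB1 x0 p0) -(mulr_powRB1 y0 p0) -(mulr_powRB1 xy0 p0) mulrDl.
have p10 : 0 <= p - 1 by rewrite subr_ge0.
rewrite lerD// ler_wpM2l// ge0_ler_powR// ?nnegrE//.
- by rewrite lerDl.
- by rewrite lerDr.
Qed.

Lemma diff_powR u v p : 0 <= u -> 0 <= v -> 1 <= p ->
  `|u - v| `^ p <= `|u `^ p - v `^ p|.
Proof.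
move=> u0 v0 p1; have p0 : 0 <= p by rewrite (le_trans ler01).
wlog vu : u v u0 v0 / v <= u.
  move=> H; have [vu|uv] := leP v u; first exact: H.
  by rewrite distrC [X in _ <= X]distrC H// ltW.
have vpup : v `^ p <= u `^ p by rewrite ge0_ler_powR.
rewrite !ger0_norm ?subr_ge0// lerBrDr.
have := @superadd_powR (u - v) v p _ v0 p1; rewrite subrK; apply.
by rewrite subr_ge0.
Qed.

Lemma key_powR u v p : 0 <= u -> 0 <= v -> 1 <= p ->
  (u - v) ^+ 2 <= ((u `^ p - v `^ p) ^+ 2) `^ p^-1.
Proof.
move=> u0 v0 p1; have p0 : 0 < p by rewrite (lt_le_trans ltr01).
set w := u `^ p - v `^ p.
rewrite -(real_normK (num_real (u - v))) -(real_normK (num_real w)) -!powR_mulrn ?normr_ge0//.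
rewrite -powRrM mulrC powRrM.
apply: ge0_ler_powR; rewrite ?nnegrE ?powR_ge0 ?normr_ge0//.
rewrite -[leLHS](powRr1 (normr_ge0 _)) -(mulfV (lt0r_neq0 p0)) powRrM.
apply: ge0_ler_powR; rewrite ?nnegrE ?powR_ge0 ?normr_ge0 ?invr_ge0 ?(ltW p0)//.
exact: diff_powR.
Qed.

End real_lemmas.
Lemma powR2 {R : realType} (a : R) : 0 <= a -> a `^ 2 = a ^+ 2.
Proof. exact: powR_mulrn. Qed.

Lemma powR_sq_bound {R : realType} (a r : R) : 0 <= r -> r <= 1 ->
  (a `^ r) ^+ 2 <= 1 + a ^+ 2.
Proof.
move=> r0 r1.
have [a1|a1] := leP a 1.
  have h : a `^ r <= 1.
    have [a0|a0] := ltP 0 a.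
      by rewrite -(powRr0 a) ger_powR// a0 a1.
    rewrite /powR; case: ifP => _; first by case: (r == 0); rewrite ?ler01.
    by rewrite ln0// mulr0 expR0.
  apply: (le_trans (exprn_ile1 _ (powR_ge0 _ _) h)).
  by rewrite lerDl sqr_ge0.
have ha : a `^ r <= a by rewrite ler1_powR// ltW.
apply: (le_trans _ (_ : a ^+ 2 <= 1 + a ^+ 2)); last by rewrite lerDr.
by rewrite lerXn2r// nnegrE ?powR_ge0// (le_trans ler01) // ltW.
Qed.

Theorem theorem2p1 (d : measure_display) (T : measurableType d) (R : realType)
  (P : probability T R) (X : T -> R) (r s : R) :
  X \in Lfun P 2%:E ->
  {ae P, forall w, 0 <= X w} ->
  0 < r -> r < s -> s <= 1 ->
  (('V_P[fun w => (X w `^ r)%R]) `^ (r^-1)%R <= ('V_P[fun w => (X w `^ s)%R]) `^ (s^-1)%R)%E.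
Proof.
move=> X2 _ r0 rs s1.
have s0 : 0 < s by rewrite (lt_trans r0).
set A := fun w => X w `^ r; set B := fun w => X w `^ s.
have mX : measurable_fun setT X.
  by move: X2; rewrite inE => /andP[]; rewrite inE.
have mA : measurable_fun setT A by apply: measurableT_comp (measurable_powR _) mX.
have mB : measurable_fun setT B by apply: measurableT_comp (measurable_powR _) mX.
set m := fine 'E_P[B].
have m0 : 0 <= m by apply: fine_ge0; apply: expectation_ge0 => w; exact: powR_ge0.
set p := s / r; set q := r / s.
have p1 : 1 <= p by rewrite /p ler_pdivlMr// mul1r ltW.
have qp : q * p = 1 by rewrite /q /p mulrA divfK ?divff// lt0r_neq0.
have pq : p^-1 = q by rewrite /p /q invf_div.
set v := m `^ q.
have v0 : 0 <= v := powR_ge0 _ _.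
have hB : forall w, B w = A w `^ p.
  by move=> w; rewrite /B /A -powRrM /p mulrC divfK// lt0r_neq0.
have hm : m = v `^ p by rewrite /v -powRrM qp powRr1.
have A2 : A \in Lfun P 2%:E.
  rewrite inE; apply/andP; split; first by rewrite inE.
  rewrite inE /= /finite_norm unlock /Lnorm.
  apply: poweR_lty.
  have iX := Lfun2_integrable_sqr X2.
  have i1 : P.-integrable setT (EFin \o (fun _ : T => 1%R)).
    exact: finite_measure_integrable_cst.
  have iD := integrableD measurableT i1 iX.
  have mD := measurable_int P iD.
  move/integrableP : iD => [_ H]; apply: le_lt_trans H.
  apply: ge0_le_integral => //.
  - by move=> w _; apply: poweR_ge0.
  - under eq_fun do rewrite /comp abse_EFin poweR_EFin.
    apply/measurable_EFinP; apply: (measurableT_comp (measurable_powR _)).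
    exact: measurableT_comp.
  - exact: measurableT_comp.
  - move=> w _; rewrite /comp abse_EFin poweR_EFin -EFinD abse_EFin lee_fin.
    rewrite [X in _ <= X]ger0_norm ?addr_ge0 ?sqr_ge0//.
    rewrite powR2 ?powR_ge0//.
    rewrite ger0_norm ?powR_ge0//; exact: powR_sq_bound (ltW r0) (ltW (lt_le_trans rs s1)).
have Z2 : (A \- cst v)%R \in Lfun P 2%:E.
  apply: rpredB; [by rewrite lee1n | by move=> ? | by move=> ?; exact: Lfun_cst].
have step1 : ('V_P[A] <= 'E_P[(A \- cst v) ^+ 2])%E.
  rewrite -(varianceB_cst_r v A2) varianceE //.
  rewrite -[X in (_ <= X)%E]sube0; apply: leeB => //.
  exact: sqre_ge0.
set f := fun w => ((B w - m) ^+ 2) `^ q.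
have mf : measurable_fun setT f.
  apply: (measurableT_comp (measurable_powR _)).
  apply: (@measurable_funX _ _ _ _ (fun w => B w - m)).
  exact: (measurable_funB mB (measurable_cst m)).
have step2 : ('E_P[(A \- cst v) ^+ 2] <= 'E_P[f])%E.
  rewrite unlock; apply: ge0_le_integral => //.
  - by move=> w _; rewrite lee_fin sqr_ge0.
  - apply/measurable_EFinP; rewrite expr2.
    by apply: measurable_funM; exact: (measurable_funB mA (measurable_cst v)).
  - exact/measurable_EFinP.
  - move=> w _; rewrite lee_fin /f hB hm -pq.
    exact: key_powR (powR_ge0 _ _) v0 p1.
have p0 : 0 < p by rewrite (lt_le_trans ltr01).
have q1 : q < 1 by rewrite /q ltr_pdivrMr// mul1r.
have Q0 : 0 < (1 - q)^-1 by rewrite invr_gt0 subr_gt0.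
have pQ : p^-1 + (1 - q)^-1^-1 = 1 by rewrite pq invrK addrC subrK.
have H := @hoelder _ _ R P f (cst 1%R) p ((1 - q)^-1) mf (measurable_cst _) p0 Q0 pQ.
rewrite Lnorm1 Lnorm_cst1 in H.
set z := (P [set: T]%classic `^ _)%E in H.
have z1 : z = 1%E.
  rewrite /z -(poweR1r ((1 - q)^-1^-1)); apply: (f_equal (fun x => poweR x _)); exact: probability_setT.
rewrite z1 mule1 in H.
rewrite unlock in H.
have VB : 'V_P[B] = (\int[P]_w ((B w - m) ^+ 2)%:E)%E.
  rewrite /variance unlock {1}expectation.unlock.
  by apply: eq_integral => w _; rewrite expr2.
have L : ('E_P[f] = \int[P]_x `|(EFin \o (f \* cst 1)%R) x|)%E.
  rewrite unlock; apply: eq_integral => w _ /=.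
  by rewrite mulr1 ger0_norm // powR_ge0.
have Rr : (\int[P]_x `|(EFin \o f) x| `^ p = \int[P]_w ((B w - m) ^+ 2)%:E)%E.
  apply: eq_integral => w _; rewrite /comp abse_EFin poweR_EFin ger0_norm ?powR_ge0//.
  by rewrite /f -powRrM qp powRr1 // sqr_ge0.
have step3 : ('E_P[f] <= 'V_P[B] `^ q)%E by rewrite L VB -pq -Rr.
have hA : ('V_P[A] <= 'V_P[B] `^ q)%E.
  exact: le_trans step1 (le_trans step2 step3).
apply: le_trans (gt0_ler_poweR _ _ _ hA) _.
- by rewrite invr_ge0 ltW.
- by rewrite in_itv /= variance_ge0 leey.
- by rewrite in_itv /= poweR_ge0 leey.
rewrite -poweRrM /q mulrAC divff ?mul1r //; exact: lt0r_neq0.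
Qed.
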